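(* Let $\phi\colon\mathbb{R}\to\mathbb{R}$ be an increasing homeomorphism with $\phi(0)=0$, let $f\colon\mathbb{R}\to\mathbb{R}$ be continuous, and let $h\colon[0,T]\times\mathbb{R}\to\mathbb{R}$ be a Carathéodory function satisfying: $(A_0)$ for all $t_0\in[0,T]$, $u_0\in\mathbb{R}$ and $\varepsilon>0$ there exists $\delta>0$ such that if $|t-t_0|<\delta$ and $|u-u_0|<\delta$ then $|h(t,u)-h(t,u_0)|<\varepsilon$ for a.e. $t$. Let $a>0$ and $\alpha\in\mathfrak{D}$ be such that $$(\phi(\alpha'(t)))'+f(\alpha(t))\alpha'(t)+h(t,\alpha(t))\ge a\quad\text{for a.e. }t\in[0,T].$$ Then $\alpha$ is a strict lower solution to $(\phi(u'))'+f(u)u'+h(t,u)=0$.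
   Context: $\mathcal{C}^1_T=\{u\in\mathcal{C}^1([0,T]):u(0)=u(T),\,u'(0)=u'(T)\}$ and $\mathfrak{D}=\{u\in\mathcal{C}^1_T:\phi(u')\text{ is absolutely continuous}\}$. A $T$-periodic solution of $(\phi(u'))'+f(u)u'+h(t,u)=0$ is a $u\in\mathfrak{D}$ satisfying the equation a.e. A function $\alpha\in\mathfrak{D}$ is a strict lower solution of this equation if $(\phi(\alpha'))'+f(\alpha)\alpha'+h(t,\alpha)>0$ for a.e. $t\in[0,T]$ and, whenever $u$ is a $T$-periodic solution with $u(t)\ge\alpha(t)$ for all $t\in[0,T]$, then $u(t)>\alpha(t)$ for all $t\in[0,T]$. A Carathéodory function is measurable in $t$, continuous in $u$, and for each $r>0$ bounded in absolute value on $[0,T]\times[-r,r]$ by an $L^1$ function of $t$. *)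

(* Defs.v *)
From HB Require Import structures.
From mathcomp Require Import all_boot all_order all_algebra.
From mathcomp Require Import all_classical all_reals all_analysis.
Set Implicit Arguments. Unset Strict Implicit. Unset Printing Implicit Defensive.
Import Order.TTheory GRing.Theory Num.Theory.
Import numFieldNormedType.Exports.
Local Open Scope classical_set_scope.
Local Open Scope ring_scope.

Section Defs.
Variable R : realType.

Definition abs_cont_on (a b : R) (g : R -> R) : Prop :=
  forall e : R, 0 < e -> exists2 d : R, 0 < d &
    forall (n : nat) (l r : 'I_n -> R),
      (forall i, a <= l i /\ l i <= r i /\ r i <= b) ->
      (forall i j, i != j -> r i <= l j \/ r j <= l i) ->
      \sum_(i < n) (r i - l i) < d ->
      \sum_(i < n) `|g (r i) - g (l i)| < e.

Definition C1_on (T : R) (u du : R -> R) : Prop :=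
  {within `[0, T], continuous du} /\
  forall t, 0 <= t <= T ->
    (fun s => (u s - u t) / (s - t)) @ within [set s | 0 <= s <= T /\ s != t] (nbhs t)
      --> du t.

Definition C1_T (T : R) (u du : R -> R) : Prop :=
  C1_on T u du /\ u 0 = u T /\ du 0 = du T.

Definition in_D (phi : R -> R) (T : R) (u du : R -> R) : Prop :=
  C1_T T u du /\ abs_cont_on 0 T (phi \o du).

(* the differential operator evaluated at t (meaningful where phi(u') is derivable) *)
Definition Lop (phi f : R -> R) (h : R -> R -> R) (u du : R -> R) (t : R) : R :=
  derive1 (phi \o du) t + f (u t) * du t + h t (u t).

Definition periodic_solution (phi f : R -> R) (h : R -> R -> R) (T : R)
  (u du : R -> R) : Prop :=
  in_D phi T u du /\
  {ae (@lebesgue_measure R), forall t, 0 <= t <= T ->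
     derivable (phi \o du) t 1 /\ Lop phi f h u du t = 0}.

Definition strict_lower_solution (phi f : R -> R) (h : R -> R -> R) (T : R)
  (alpha dalpha : R -> R) : Prop :=
  in_D phi T alpha dalpha /\
  {ae (@lebesgue_measure R), forall t, 0 <= t <= T ->
     derivable (phi \o dalpha) t 1 /\ 0 < Lop phi f h alpha dalpha t} /\
  (forall u du, periodic_solution phi f h T u du ->
     (forall t, 0 <= t <= T -> alpha t <= u t) ->
     (forall t, 0 <= t <= T -> alpha t < u t)).

Definition increasing_homeo_fix0 (phi : R -> R) : Prop :=
  (forall x y, x < y -> phi x < phi y) /\ continuous phi /\
  (exists psi : R -> R, cancel phi psi /\ cancel psi phi /\ continuous psi) /\
  phi 0 = 0.

Definition caratheodory (T : R) (h : R -> R -> R) : Prop :=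
  (forall u, measurable_fun `[0, T] (fun t => h t u)) /\
  (forall t, 0 <= t <= T -> continuous (h t)) /\
  (forall r : R, 0 < r -> exists g : R -> R,
     (@lebesgue_measure R).-integrable `[0, T] (EFin \o g) /\
     forall t u, 0 <= t <= T -> `|u| <= r -> `|h t u| <= g t).

Definition condA0 (T : R) (h : R -> R -> R) : Prop :=
  forall t0 u0 e : R, 0 <= t0 <= T -> 0 < e -> exists2 d : R, 0 < d &
    {ae (@lebesgue_measure R), forall t, 0 <= t <= T -> `|t - t0| < d ->
       forall u, `|u - u0| < d -> `|h t u - h t u0| < e}.

End Defs.

(* Main.v *)
Require Import Defs.
From HB Require Import structures.
From mathcomp Require Import all_boot all_order all_algebra.
From mathcomp Require Import all_classical all_reals all_analysis.
Import Order.TTheory GRing.Theory Num.Theory.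
Import numFieldNormedType.Exports.
Local Open Scope classical_set_scope.
Local Open Scope ring_scope.
From mathcomp Require Import ring lra measurable_realfun.
Lemma within_eps (R : realType) (A : set R) (t : R) (q : R -> R) (D : R) :
  q @ within A (nbhs t) --> D -> forall e, 0 < e ->
  exists2 d, 0 < d & forall s, A s -> `|s - t| < d -> `|q s - D| < e.
Proof.
move=> /cvgrPdist_lt H e e0; have := H e e0.
rewrite /within /= => /nbhs_ballP [d d0 Hd]; exists d => // s As st.
rewrite distrC; apply: Hd => //.
by rewrite /ball /= distrC.
Qed.

Lemma at_eps (R : realType) (t : R) (q : R -> R) (D : R) :
  q @ t^' --> D -> forall e, 0 < e ->
  exists2 d, 0 < d & forall s, s != t -> `|s - t| < d -> `|q s - D| < e.
Proof.
move=> H; apply: (@within_eps R (fun s => s != t)) => //.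
Qed.
Lemma deriv_eps (R : realType) (g : R -> R) x : derivable g x 1 ->
  forall e, 0 < e -> exists2 d, 0 < d & forall y, y != x -> `|y - x| < d ->
  `|(g y - g x) / (y - x) - derive1 g x| < e.
Proof.
move=> H e e0.
have H' : (fun h => h^-1 *: ((g \o shift x) (h *: 1) - g x)) @ 0^' --> derive1 g x.
  by rewrite derive1E; exact: H.
have [d d0 Hd] := @at_eps _ _ _ _ H' e e0.
exists d => // y yx yxd.
have := Hd (y - x); rewrite subr_eq0 subr0 => /(_ yx yxd).
by rewrite /= /shift scaler1 subrK mulrC.
Qed.
Lemma quot_bound (R : realType) (A z D e : R) : z != 0 -> `|A / z - D| < e ->
  (0 < z -> A <= (D + e) * z /\ (D - e) * z <= A) /\
  (z < 0 -> - A <= (D + e) * (- z) /\ (D - e) * (- z) <= - A).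
Proof.
move=> z0 H.
have [H1 H2] : D - e < A / z /\ A / z < D + e.
  by move: H; rewrite ltr_norml => /andP[K1 K2]; split; lra.
rewrite -(divfK z0 A).
move: (A / z) H1 H2 => q H1 H2.
split => zp; split; nra.
Qed.

Definition Fam (R : realType) (c m : R) (g : R -> R) (U : set R) (x : R) :=
  exists n (l r : nat -> R),
   [/\ (forall i, (i < n)%N -> c <= l i /\ l i <= r i /\ r i <= x),
   (forall i j, (i < n)%N -> (j < n)%N -> i != j -> r i <= l j \/ r j <= l i),
   (forall i z, (i < n)%N -> l i <= z -> z <= r i -> U z) &
   g x - g c <= m * (x - c) + \sum_(i < n) (g (r i) - g (l i))].
Arguments Fam {R}.

Lemma Fam0 {R : realType} {c m : R} {g U} : Fam c m g U c.
Proof.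
exists 0%N, (fun _ => 0), (fun _ => 0); split => //.
by rewrite big_ord0 !subrr mulr0 addr0.
Qed.

Lemma Fam_mono {R : realType} {c m : R} {g U} {x y} : Fam c m g U y -> y <= x ->
  g x - g y <= m * (x - y) -> Fam c m g U x.
Proof.
move=> [n [l [r [H1 H2 H3 H4]]]] yx Hg.
exists n, l, r; split => //.
  by move=> i /H1 [? [? ?]]; split => //; split => //; lra.
have -> : g x - g c = (g x - g y) + (g y - g c) by ring.
have -> : m * (x - c) = m * (x - y) + m * (y - c) by ring.
lra.
Qed.

Lemma Fam_ext {R : realType} {c m : R} {g U} {x y} : Fam c m g U y -> y <= x ->
  c <= y -> 0 <= m -> (forall z, y <= z -> z <= x -> U z) -> Fam c m g U x.
Proof.
move=> [n [l [r [H1 H2 H3 H4]]]] yx cy m0 HU.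
exists n.+1, (fun i => if i == n then y else l i), (fun i => if i == n then x else r i).
split.
- move=> i; rewrite ltnS leq_eqVlt => /orP [/eqP ->|ilt]; rewrite ?eqxx.
    by split => //; split => //; lra.
  by rewrite ltn_eqF //; have [? [? ?]] := H1 i ilt; split => //; split => //; lra.
- move=> i j; rewrite ltnS leq_eqVlt => /orP [/eqP ->|ilt];
    rewrite ltnS leq_eqVlt => /orP [/eqP ->|jlt]; rewrite ?eqxx //.
  + by rewrite (ltn_eqF jlt) => _; right; have [? [? ?]] := H1 j jlt; lra.
  + by rewrite (ltn_eqF ilt) => _; left; have [? [? ?]] := H1 i ilt; lra.
  + by rewrite (ltn_eqF ilt) (ltn_eqF jlt); apply: H2.
- move=> i z; rewrite ltnS leq_eqVlt => /orP [/eqP ->|ilt]; rewrite ?eqxx.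
    exact: HU.
  by rewrite (ltn_eqF ilt); apply: H3.
rewrite big_ord_recr /= eqxx.
rewrite (eq_bigr (fun i : 'I_n => g (r i) - g (l i))); last first.
  by move=> i _; rewrite /= (ltn_eqF (ltn_ord i)).
have -> : g x - g c = (g x - g y) + (g y - g c) by ring.
have : m * (y - c) <= m * (x - c) by apply: ler_wpM2l => //; lra.
lra.
Qed.
Lemma real_ind (R : realType) (c d : R) (P : R -> Prop) : c <= d ->
  (forall x, c <= x -> x <= d -> (forall y, c <= y -> y < x -> P y) -> P x) ->
  (forall x, c <= x -> x < d -> (forall y, c <= y -> y <= x -> P y) ->
     exists2 eta, 0 < eta & forall y, x < y -> y < x + eta -> y <= d -> P y) ->
  forall x, c <= x -> x <= d -> P x.
Proof.
move=> cd H1 H2.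
pose S := [set x | (c <= x /\ x <= d) /\ forall y, c <= y -> y <= x -> P y].
have Pc : P c by apply: H1 => // y; lra.
have Sc : S c by split; [split; lra | move=> y h1 h2; have -> : y = c by lra].
have hS : has_sup S by split; [exists c | exists d => x [[hx1 hx2] _]].
set s := sup S.
have ub : ubound S s := sup_upper_bound hS.
have cs : c <= s by apply: ub.
have sd : s <= d by apply: ge_sup; [exists c | move=> x [[hx1 hx2] _]].
have Hlt : forall y, c <= y -> y < s -> P y.
  move=> y hy1 hy2.
  have [e [_ he2] he] := @sup_adherent R S (s - y) ltac:(lra) hS.
  rewrite -/s in he; by apply: he2; lra.
have Ps : P s by apply: H1.
have Hle : forall y, c <= y -> y <= s -> P y.
  move=> y hy1 hy2; have [->|ys] := eqVneq y s => //; apply: Hlt => //.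
  by rewrite lt_neqAle ys hy2.
have ds : s = d.
  apply/eqP; rewrite eq_le sd /=; rewrite leNgt; apply/negP => sd'.
  have [eta eta0 Heta] := H2 s cs sd' Hle.
  pose z := s + Num.min eta (d - s) / 2.
  have hz1 : Num.min eta (d - s) <= eta by rewrite ge_min lexx.
  have hz2 : Num.min eta (d - s) <= d - s by rewrite ge_min lexx orbT.
  have hz3 : 0 < Num.min eta (d - s) by rewrite lt_min eta0 /=; lra.
  have : S z.
    split; first by rewrite /z; split; lra.
    move=> y hy1 hy2; have [ys|ys] := leP y s; first by apply: Hle.
    apply: Heta; rewrite /z in hy2; lra.
  move/ub; rewrite /z; lra.
move=> x hx1 hx2; apply: Hle; lra.
Qed.

Lemma fam_main (R : realType) (c d m : R) g (U : set R) : c <= d -> 0 <= m ->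
  (forall x, c <= x -> x <= d ->
    (exists2 eta, 0 < eta & forall y, c <= y -> y <= d -> `|y - x| < eta ->
        (x <= y -> g y - g x <= m * (y - x)) /\ (y <= x -> g x - g y <= m * (x - y)))
    \/ (exists2 eta, 0 < eta & forall y, `|y - x| < eta -> U y)) ->
  Fam c m g U d.
Proof.
move=> cd m0 HG.
apply: (@real_ind R c d (Fam c m g U) cd) => //; last first.
- move=> x cx xd IH; have Fx := IH x cx (lexx x).
  case: (HG x cx (ltW xd)) => [[eta eta0 Hg]|[eta eta0 HU]].
    exists eta => // y xy yeta yd.
    apply: (Fam_mono Fx (ltW xy)).
    have [+ _] := Hg y ltac:(lra) yd ltac:(rewrite ger0_norm; lra).
    by apply; lra.
  exists eta => // y xy yeta yd.
  apply: (Fam_ext Fx (ltW xy) cx m0) => z z1 z2; apply: HU.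
  rewrite ger0_norm; lra.
- move=> x cx xd IH.
  case: (eqVneq x c) => [->|xc]; first exact: Fam0.
  have cx' : c < x by rewrite lt_neqAle eq_sym xc cx.
  case: (HG x cx xd) => [[eta eta0 Hg]|[eta eta0 HU]].
  + have [y [hy1 hy2 hy3 hy4]] : exists y, [/\ c <= y, y < x, x - eta < y & y <= d].
      case: (leP c (x - eta / 2)) => h.
        by exists (x - eta / 2); split; lra.
      by exists c; split; lra.
    apply: (Fam_mono (IH y hy1 hy2) (ltW hy2)).
    have [_ +] := Hg y hy1 hy4 ltac:(rewrite ler0_norm; lra).
    by apply; lra.
  + have [y [hy1 hy2 hy3 hy4]] : exists y, [/\ c <= y, y < x, x - eta < y & y <= d].
      case: (leP c (x - eta / 2)) => h.
        by exists (x - eta / 2); split; lra.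
      by exists c; split; lra.
    apply: (Fam_ext (IH y hy1 hy2) (ltW hy2) hy1 m0) => z z1 z2; apply: HU.
    rewrite ler0_norm; lra.
Qed.
Lemma fam_len (R : realType) (n : nat) (l r : nat -> R) (U : set R) (dl : R) :
  open U -> (lebesgue_measure U < dl%:E)%E ->
  (forall i, (i < n)%N -> l i <= r i) ->
  (forall i j, (i < n)%N -> (j < n)%N -> i != j -> r i <= l j \/ r j <= l i) ->
  (forall i z, (i < n)%N -> l i <= z -> z <= r i -> U z) ->
  \sum_(i < n) (r i - l i) < dl.
Proof.
move=> oU mU Hlr Hdis HU.
pose F := fun i : nat => [set` `[l i, r i[] : set R.
have mF : forall i : 'I_n, measurable (F i) by move=> i; exact: measurable_itv.
have tF : trivIset setT (fun i : 'I_n => F i).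
  move=> i j _ _ [z [/= Fi Fj]]; apply/val_inj/eqP; apply: contraT => ij.
  move: Fi Fj; rewrite /F /= !in_itv /= => /andP [a1 a2] /andP [b1 b2].
  by case: (Hdis i j (ltn_ord i) (ltn_ord j) ij); lra.
have E : lebesgue_measure (\big[setU/set0]_(i < n) F i) = (\sum_(i < n) (r i - l i))%:E.
  rewrite measure_bigsetU_ord // -sumEFin; apply: eq_bigr => i _.
  apply: (eq_trans (lebesgue_measure_itv `[l i, r i[)); rewrite /= lte_fin.
  have := Hlr i (ltn_ord i); rewrite le_eqVlt => /orP [/eqP ->|-> //].
  by rewrite ltxx subrr.
have sub : \big[setU/set0]_(i < n) F i `<=` U.
  rewrite -bigcup_mkord => z [i /= ilt]; rewrite /F /= in_itv /= => /andP [z1 z2].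
  by apply: (HU i) => //; lra.
rewrite -lte_fin -E; apply: le_lt_trans mU.
apply: le_measure => //; rewrite inE.
  by apply: bigsetU_measurable => i _; exact: measurable_itv.
exact: open_measurable.
Qed.

Lemma ac_mono (R : realType) (T c d k : R) (g : R -> R) :
  0 <= c -> c <= d -> d <= T -> 0 <= k ->
  abs_cont_on 0 T g ->
  {ae (@lebesgue_measure R), forall t, c <= t <= d ->
     derivable g t 1 /\ derive1 g t <= - k} ->
  g d - g c <= - k * (d - c).
Proof.
move=> c0 cd dT k0 Hac Hae.
suff H : forall e, 0 < e -> g d - g c + k * (d - c) <= e * (d - c + 1 + k).
  set x := g d - g c + k * (d - c) in H.
  have C0 : 0 < d - c + 1 + k by lra.
  have : x <= 0.
    rewrite leNgt; apply/negP => x0.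
    have := H (x / (2 * (d - c + 1 + k))) ltac:(apply: divr_gt0; lra).
    have -> : x / (2 * (d - c + 1 + k)) * (d - c + 1 + k) = x / 2.
      by field; rewrite gt_eqF.
    lra.
  rewrite /x; lra.
move=> e e0.
have [dl0 dl0pos Hdl] := Hac e e0.
pose dl := Num.min dl0 e.
have dl1 : dl <= dl0 by rewrite /dl ge_min lexx.
have dl2 : dl <= e by rewrite /dl ge_min lexx orbT.
have dl3 : 0 < dl by rewrite /dl lt_min dl0pos e0.
case: Hae => A [mA A0 HA].
have Afin : (lebesgue_measure A < +oo)%E.
  by apply: (@eq_ind_r _ 0%E (fun v => (v < +oo)%E)); [exact: ltry | exact: A0].
have [U [oU AU UA]] := lebesgue_regularity_outer mA Afin dl3.
have muU : (lebesgue_measure U < dl%:E)%E.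
  have mU : measurable U by exact: open_measurable.
  apply: (le_lt_trans _ (_ : (lebesgue_measure (U `\` A) + lebesgue_measure A < dl%:E)%E)); last first.
    apply: (@eq_ind_r _ 0%E (fun v => (lebesgue_measure (U `\` A) + v < dl%:E)%E)); [|exact: A0].
    by rewrite adde0.
  apply: le_trans (measureU2 _ _ _); [|exact: measurableD|exact: mA].
  apply: le_measure; rewrite ?inE.
  - exact: mU.
  - by apply: measurableU => //; apply: measurableD.
  - by move=> z Uz; case: (pselect (A z)) => Az; [right|left].
pose gt := fun t => g t + k * t.
have F := @fam_main R c d e gt U cd (ltW e0).
have [] := F.
  move=> x cx xd; case: (pselect (A x)) => [Ax|nAx].
    right; have := oU x (AU _ Ax) => /nbhs_ballP [eta eta0 Hb].
    by exists eta => // y hy; apply: Hb; rewrite /ball /= distrC.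
  left.
  have [Px|nPx] := pselect (c <= x <= d -> derivable g x 1 /\ derive1 g x <= - k); last first.
    by exfalso; apply: nAx; apply: HA.
  have [dg Dk] := Px ltac:(by rewrite cx xd).
  have [dd dd0 Hq] := @deriv_eps _ _ _ dg e e0.
  exists dd => // y cy yd yx.
  case: (eqVneq y x) => [->|yx']; first by rewrite !subrr mulr0; split.
  have yx0 : y - x != 0 by rewrite subr_eq0.
  have [Q1 Q2] := @quot_bound _ _ _ _ _ yx0 (Hq y yx' yx).
  rewrite /gt; split => hxy.
    have xy : 0 < y - x by rewrite subr_gt0 lt_neqAle eq_sym yx' hxy.
    have [Q _] := Q1 xy.
    have : derive1 g x * (y - x) <= - k * (y - x) by apply: ler_wpM2r; lra.
    lra.
  have xy : y - x < 0 by rewrite subr_lt0 lt_neqAle yx' hxy.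
  have [Q _] := Q2 xy.
  have : derive1 g x * (- (y - x)) <= - k * (- (y - x)) by apply: ler_wpM2r; lra.
  lra.
move=> n [l [r [H1 H2 H3 H4]]].
have Hlen := @fam_len _ _ _ _ _ _ oU muU (fun i hi => (H1 i hi).2.1) H2 H3.
have Hab := Hdl n (fun i : 'I_n => l i) (fun i : 'I_n => r i).
have Hsum : \sum_(i < n) `|g (r i) - g (l i)| < e.
apply: Hab.
- move=> i; have [? [? ?]] := H1 i (ltn_ord i); split; first lra.
  by split => //; lra.
- move=> i j ij; apply: H2 => //.
- by apply: lt_le_trans Hlen _; lra.
have E : \sum_(i < n) (gt (r i) - gt (l i)) =
    \sum_(i < n) (g (r i) - g (l i)) + k * \sum_(i < n) (r i - l i).
  rewrite mulr_sumr -big_split /=; apply: eq_bigr => i _; rewrite /gt; ring.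
have S1 : \sum_(i < n) (g (r i) - g (l i)) <= \sum_(i < n) `|g (r i) - g (l i)|.
  by apply: ler_sum => i _; exact: ler_norm.
have S2 : k * \sum_(i < n) (r i - l i) <= k * e.
  by apply: ler_wpM2l => //; lra.
move: H4; rewrite E /gt; lra.
Qed.

Definition Q_at {R : realType} (A : set R) (w : R -> R) (x D : R) :=
  forall e, 0 < e -> exists2 d, 0 < d & forall s, A s -> s != x -> `|s - x| < d ->
    `|(w s - w x) / (s - x) - D| < e.

Lemma min2 {R : realType} {a b : R} : 0 < a -> 0 < b ->
  exists c, [/\ 0 < c, c < a & c < b].
Proof.
move=> a0 b0; exists (Num.min a b / 2).
have h1 : Num.min a b <= a by rewrite ge_min lexx.
have h2 : Num.min a b <= b by rewrite ge_min lexx orbT.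
have h3 : 0 < Num.min a b by rewrite lt_min a0 b0.
split; lra.
Qed.

Lemma C1_quot {R : realType} (T : R) u du t : C1_on T u du -> 0 <= t <= T ->
  Q_at [set s | 0 <= s <= T] u t (du t).
Proof.
case=> _ /(_ t) H ht e e0.
have [d d0 Hd] := @within_eps R [set s | 0 <= s <= T /\ s != t] t _ _ (H ht) e e0.
by exists d => // s hs st sd; apply: Hd.
Qed.

Lemma Q_atB {R : realType} (A : set R) u v x Du Dv :
  Q_at A u x Du -> Q_at A v x Dv -> Q_at A (fun t => u t - v t) x (Du - Dv).
Proof.
move=> Hu Hv e e0.
have [d1 d10 H1] := Hu (e / 2) ltac:(lra).
have [d2 d20 H2] := Hv (e / 2) ltac:(lra).
have [d [d0 dd1 dd2]] := min2 d10 d20.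
exists d => // s As sx sd.
have K1 := H1 s As sx ltac:(lra).
have K2 := H2 s As sx ltac:(lra).
have -> : (u s - v s - (u x - v x)) / (s - x) - (Du - Dv) =
   ((u s - u x) / (s - x) - Du) - ((v s - v x) / (s - x) - Dv).
  by rewrite !mulrBl; ring.
apply: le_lt_trans (ler_normB _ _) _; lra.
Qed.

Lemma Q_at_cont {R : realType} (A : set R) u x D : Q_at A u x D ->
  forall e, 0 < e -> exists2 d, 0 < d & forall s, A s -> `|s - x| < d -> `|u s - u x| < e.
Proof.
move=> H e e0.
have [d1 d10 H1] := H 1 ltr01.
have Dp : 0 < `|D| + 1 by rewrite ltr_pwDr // ltr01 ?normr_ge0.
have [d [d0 dd1 dd2]] := min2 d10 (divr_gt0 e0 Dp).
exists d => // s As sd.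
case: (eqVneq s x) => [->|sx]; first by rewrite subrr normr0.
have K := H1 s As sx ltac:(lra).
have sx0 : s - x != 0 by rewrite subr_eq0.
have -> : u s - u x = (u s - u x) / (s - x) * (s - x) by rewrite divfK.
rewrite normrM.
set q := (u s - u x) / (s - x).
have Kq : `|q| < `|D| + 1.
  have : `|q| <= `|q - D| + `|D|.
    by have := ler_normD (q - D) D; rewrite subrK.
  lra.
have hd : d * (`|D| + 1) < e by rewrite -ltr_pdivlMr.
have n0 : 0 <= `|q| by [].
have n1 : 0 <= `|s - x| by [].
nra.
Qed.

Lemma prod_small {R : realType} (T : R) (f u du al dal : R -> R) t1 (e : R) :
  continuous f -> 0 <= t1 <= T -> C1_on T u du -> C1_on T al dal ->
  u t1 = al t1 -> du t1 = dal t1 -> 0 < e ->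
  exists2 d, 0 < d & forall s, 0 <= s <= T -> `|s - t1| < d ->
    `|f (u s) * du s - f (al s) * dal s| < e.
Proof.
move=> fc ht Cu Cal eu edu e0.
pose A := [set` `[0, T]] : set R.
have At : A t1 by rewrite /A /= in_itv.
have ucont : forall (w dw : R -> R), C1_on T w dw -> w @ within A (nbhs t1) --> w t1.
  move=> w dw Cw; apply/cvgrPdist_lt => eps eps0.
  have [d d0 Hd] := @Q_at_cont _ _ _ _ _ (@C1_quot _ _ _ _ _ Cw ht) eps eps0.
  rewrite /within /=; apply/nbhs_ballP; exists d => // s sd As.
  rewrite distrC; apply: Hd.
    by move: As; rewrite /A /= in_itv.
  by move: sd; rewrite /ball /= distrC.
have dcont : forall (w dw : R -> R), C1_on T w dw -> dw @ within A (nbhs t1) --> dw t1.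
  move=> w dw [Cd _].
  by move: Cd; rewrite subspace_continuousP => /(_ t1 At).
have H : (fun s => f (u s) * du s - f (al s) * dal s) @ within A (nbhs t1) -->
    f (u t1) * du t1 - f (al t1) * dal t1.
  apply: (@cvgB _ _ _ _ _ (fun s => f (u s) * du s) (fun s => f (al s) * dal s)).
  - apply: (@cvgM _ _ _ _ (fun s => f (u s)) du).
    + apply: cvg_comp (ucont _ _ Cu) _; exact: fc.
    + exact: dcont _ _ Cu.
  - apply: (@cvgM _ _ _ _ (fun s => f (al s)) dal).
    + apply: cvg_comp (ucont _ _ Cal) _; exact: fc.
    + exact: dcont _ _ Cal.
have [d d0 Hd] := @within_eps _ _ _ _ _ H e e0.
rewrite eu edu subrr in Hd.
exists d => // s hs sd; have := Hd s _ sd; rewrite subr0; apply.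
by rewrite /A /= in_itv.
Qed.

Lemma acB {R : realType} (T : R) (g1 g2 : R -> R) :
  abs_cont_on 0 T g1 -> abs_cont_on 0 T g2 -> abs_cont_on 0 T (fun t => g1 t - g2 t).
Proof.
move=> H1 H2 e e0.
have [d1 d10 K1] := H1 (e / 2) ltac:(lra).
have [d2 d20 K2] := H2 (e / 2) ltac:(lra).
have [d [d0 dd1 dd2]] := min2 d10 d20.
exists d => // n l r Hb Hd Hs.
have := K1 n l r Hb Hd ltac:(lra).
have := K2 n l r Hb Hd ltac:(lra).
have : \sum_(i < n) `|g1 (r i) - g2 (r i) - (g1 (l i) - g2 (l i))| <=
   \sum_(i < n) `|g1 (r i) - g1 (l i)| + \sum_(i < n) `|g2 (r i) - g2 (l i)|.
  rewrite -big_split /=; apply: ler_sum => i _.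
  have -> : g1 (r i) - g2 (r i) - (g1 (l i) - g2 (l i)) =
    (g1 (r i) - g1 (l i)) - (g2 (r i) - g2 (l i)) by ring.
  exact: ler_normB.
lra.
Qed.

Lemma slope_of_quot {R : realType} (A : set R) (w : R -> R) (x D m : R) :
  Q_at A w x D -> D < m ->
  exists2 eta, 0 < eta & forall y, A y -> `|y - x| < eta ->
    (x <= y -> w y - w x <= m * (y - x)) /\ (y <= x -> w x - w y <= m * (x - y)).
Proof.
move=> H Dm.
have [d d0 Hd] := H (m - D) ltac:(lra).
exists d => // y Ay yx.
case: (eqVneq y x) => [->|yx']; first by rewrite !subrr mulr0; split.
have yx0 : y - x != 0 by rewrite subr_eq0.
have [Q1 Q2] := @quot_bound _ _ _ _ _ yx0 (Hd y Ay yx' yx).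
have E : D + (m - D) = m by ring.
rewrite E in Q1 Q2.
split => hxy.
  have xy : 0 < y - x by rewrite subr_gt0 lt_neqAle eq_sym yx' hxy.
  by have [Q _] := Q1 xy; lra.
have xy : y - x < 0 by rewrite subr_lt0 lt_neqAle yx' hxy.
by have [Q _] := Q2 xy; move: Q; rewrite !opprB.
Qed.

Lemma le_eps {R : realType} (x C : R) : 0 <= C ->
  (forall e, 0 < e -> x <= e * C) -> x <= 0.
Proof.
move=> C0 H; rewrite leNgt; apply/negP => x0.
have C1 : C + 1 != 0 by rewrite gt_eqF //; lra.
have := H (x / (C + 1)) ltac:(apply: divr_gt0; lra).
have hy : x / (C + 1) * (C + 1) = x by rewrite divfK.
have yp : 0 < x / (C + 1) by apply: divr_gt0; lra.
move: hy yp; move: (x / (C + 1)) => y hy yp.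
lra.
Qed.

Lemma aeS' {R : realType} (P Q : R -> Prop) : (forall x, P x -> Q x) ->
  {ae (@lebesgue_measure R), forall x, P x} -> {ae (@lebesgue_measure R), forall x, Q x}.
Proof.
move=> PQ [A [mA A0 HA]]; exists A; split => // x nQ; apply: HA => Px.
by apply: nQ; apply: PQ.
Qed.

Lemma aeI' {R : realType} (P Q : R -> Prop) :
  {ae (@lebesgue_measure R), forall x, P x} -> {ae (@lebesgue_measure R), forall x, Q x} ->
  {ae (@lebesgue_measure R), forall x, P x /\ Q x}.
Proof.
move=> [A [mA A0 HA]] [B [mB B0 HB]]; exists (A `|` B); split.
- exact: measurableU.
- apply/eqP; rewrite eq_le measure_ge0 andbT.
  apply: le_trans (measureU2 _ _ _) _ => //.
  apply: (@eq_ind_r _ 0%E (fun v => (v + lebesgue_measure B <= 0)%E)); [|exact: A0].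
  apply: (@eq_ind_r _ 0%E (fun v => (0 + v <= 0)%E)); [|exact: B0].
  by rewrite adde0.
- move=> x /= nPQ; case: (pselect (P x)) => Px; last by left; apply: HA.
  by right; apply: HB => Qx; apply: nPQ.
Qed.

Lemma step3 {R : realType} (T t1 dl : R) (w dw : R -> R) : 0 <= t1 -> 0 < dl -> t1 + dl <= T ->
  (forall t, 0 <= t <= T -> Q_at [set s | 0 <= s <= T] w t (dw t)) ->
  (forall t, 0 <= t <= T -> 0 <= w t) -> w t1 = 0 -> dw t1 = 0 ->
  (forall s, t1 < s -> s <= t1 + dl -> dw s < 0) -> False.
Proof.
move=> t10 dl0 dT Qw wge wt1 dwt1 dwneg.
have hd : 0 <= t1 + dl <= T by apply/andP; split; lra.
have dwd : dw (t1 + dl) < 0 by apply: dwneg; lra.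
have [e1 e10 He1] := Qw _ hd (- dw (t1 + dl) / 2) ltac:(lra).
have [s [s0 s1 s2]] := @min2 _ _ _ e10 dl0.
have ys : (t1 + dl - s) - (t1 + dl) = - s by ring.
have hy : 0 <= t1 + dl - s <= T by apply/andP; split; lra.
have yt : t1 + dl - s != t1 + dl by rewrite -subr_eq0 ys oppr_eq0 gt_eqF.
have := He1 (t1 + dl - s) hy yt ltac:(rewrite ys normrN gtr0_norm //).
rewrite ys => Hq.
have s0' : - s != 0 by rewrite oppr_eq0 gt_eqF.
have [_ Q] := @quot_bound _ _ _ _ _ s0' Hq.
have [Q' _] := Q ltac:(lra).
have wlt : w (t1 + dl) < w (t1 + dl - s).
  move: Q'; rewrite opprK => Q'.
  have : (dw (t1 + dl) + - dw (t1 + dl) / 2) * s < 0 by rewrite pmulr_llt0 //; lra.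
  lra.
have wy : w (t1 + dl - s) <= 0.
  apply: (@le_eps _ _ (t1 + dl - s - t1)); first lra.
  move=> eps eps0.
  have F := @fam_main R t1 (t1 + dl - s) eps w set0 ltac:(lra) (ltW eps0).
  have [] := F.
    move=> x x1 x2; left.
    have hx : 0 <= x <= T by apply/andP; split; lra.
    have dxe : dw x < eps.
      case: (eqVneq x t1) => [->|xt1]; first by rewrite dwt1.
      have : dw x < 0 by apply: dwneg; [rewrite lt_neqAle eq_sym xt1 x1 | lra].
      lra.
    have [eta eta0 Heta] := @slope_of_quot _ _ _ _ _ _ (Qw x hx) dxe.
    exists eta => // y' y1 y2 y3; apply: Heta => //.
    by apply/andP; split; lra.
  move=> n [l [r [H1 H2 H3 H4]]].
  have sum0 : \sum_(i < n) (w (r i) - w (l i)) = 0.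
    case: n H1 H2 H3 H4 => [|n] H1 H2 H3 H4; first by rewrite big_ord0.
    have [_ [lr _]] := H1 0%N isT.
    by exfalso; apply: (H3 0%N (l 0%N)).
  move: H4; rewrite sum0 wt1 addr0 subr0.
  by [].
have := wge _ hd.
lra.
Qed.

Lemma deriv_bound {R : realType} (a Du Da fu fa hu ha h0 : R) :
  Du + fu + hu = 0 -> a <= Da + fa + ha -> `|fu - fa| < a / 4 ->
  `|hu - h0| < a / 8 -> `|ha - h0| < a / 8 -> Du - Da <= - (a / 2).
Proof.
move=> Lu La.
rewrite !ltr_norml => /andP [P1 P2] /andP [h11 h12] /andP [h21 h22].
lra.
Qed.

Lemma step2 {R : realType} (T t1 dl a : R) (phi : R -> R) (du dalpha : R -> R) :
  (forall x y, x < y -> phi x < phi y) ->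
  0 <= t1 -> t1 + dl <= T -> 0 < a ->
  abs_cont_on 0 T (phi \o du) -> abs_cont_on 0 T (phi \o dalpha) ->
  du t1 = dalpha t1 ->
  {ae (@lebesgue_measure R), forall t, t1 <= t <= t1 + dl ->
     derivable (phi \o du) t 1 /\ derivable (phi \o dalpha) t 1 /\
     derive1 (phi \o du) t - derive1 (phi \o dalpha) t <= - (a / 2)} ->
  forall s, t1 < s -> s <= t1 + dl -> du s - dalpha s < 0.
Proof.
move=> phimono t10 dT a0 ACu ACal edu aeG s s1 s2.
pose G := fun t => phi (du t) - phi (dalpha t).
have ACG : abs_cont_on 0 T G := @acB _ _ _ _ ACu ACal.
have aeGs : {ae (@lebesgue_measure R), forall t, t1 <= t <= s ->
    derivable G t 1 /\ derive1 G t <= - (a / 2)}.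
  apply: (@aeS' R _ _ _ aeG) => t Ht /andP [h1 h2].
  have [dut [dat Hd]] : derivable (phi \o du) t 1 /\ derivable (phi \o dalpha) t 1 /\
     derive1 (phi \o du) t - derive1 (phi \o dalpha) t <= - (a / 2).
    by apply: Ht; apply/andP; split; lra.
  split; first exact: derivableB dut dat.
  have E : derive1 G t = derive1 (phi \o du) t - derive1 (phi \o dalpha) t.
    by rewrite !derive1E; exact: deriveB dut dat.
  by rewrite E.
have := @ac_mono _ T t1 s (a / 2) G t10 (ltW s1) ltac:(lra) ltac:(lra) ACG aeGs.
have -> : G t1 = 0 by rewrite /G edu subrr.
rewrite subr0 /G => Hs.
have Hlt : phi (du s) < phi (dalpha s).
  have : 0 < a / 2 * (s - t1) by apply: mulr_gt0; lra.
  lra.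
rewrite subr_lt0 ltNge; apply/negP; rewrite le_eqVlt => /orP [/eqP E|lt].
  by move: Hlt; rewrite E ltxx.
by have := phimono _ _ lt; lra.
Qed.

Lemma ae_bound {R : realType} (T t1 dl a dp dA du' da' : R) (phi f : R -> R)
  (h : R -> R -> R) (u du alpha dalpha : R -> R) :
  0 <= t1 -> t1 + dl <= T -> 0 < dl -> dl < dp -> dl < dA -> dl < du' -> dl < da' ->
  u t1 = alpha t1 ->
  (forall s, 0 <= s <= T -> `|s - t1| < dp ->
     `|f (u s) * du s - f (alpha s) * dalpha s| < a / 4) ->
  (forall s, 0 <= s <= T -> `|s - t1| < du' -> `|u s - u t1| < dA) ->
  (forall s, 0 <= s <= T -> `|s - t1| < da' -> `|alpha s - alpha t1| < dA) ->
  {ae (@lebesgue_measure R), forall t, 0 <= t <= T -> `|t - t1| < dA ->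
     forall v, `|v - alpha t1| < dA -> `|h t v - h t (alpha t1)| < a / 8} ->
  {ae (@lebesgue_measure R), forall t, 0 <= t <= T ->
     derivable (phi \o du) t 1 /\ Lop phi f h u du t = 0} ->
  {ae (@lebesgue_measure R), forall t, 0 <= t <= T ->
     derivable (phi \o dalpha) t 1 /\ a <= Lop phi f h alpha dalpha t} ->
  {ae (@lebesgue_measure R), forall t, t1 <= t <= t1 + dl ->
     derivable (phi \o du) t 1 /\ derivable (phi \o dalpha) t 1 /\
     derive1 (phi \o du) t - derive1 (phi \o dalpha) t <= - (a / 2)}.
Proof.
move=> t10 dT dl0 dlp dlA dlu dla eu Hp Hu' Ha' HA Huae Hae.
apply: (@aeS' R _ _ _ (@aeI' R _ _ (@aeI' R _ _ Huae Hae) HA)) => t [[Hut Halt] HAt] /andP [ht1' ht2'].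
have htT : 0 <= t <= T by apply/andP; split; lra.
have [dut Lu] := Hut htT.
have [dat La] := Halt htT.
have hst : `|t - t1| <= dl by rewrite ger0_norm; lra.
split => //; split => //.
have P := Hp t htT ltac:(lra).
have Hu1 := Hu' t htT ltac:(lra).
have Ha1 := Ha' t htT ltac:(lra).
have h1 := HAt htT ltac:(lra) (u t) ltac:(by rewrite -eu).
have h2 := HAt htT ltac:(lra) (alpha t) Ha1.
move: Lu La; rewrite /Lop => Lu La.
exact: deriv_bound Lu La P h1 h2.
Qed.

Theorem lemma2p1 (R : realType) (T : R) (phi f : R -> R) (h : R -> R -> R)
  (a : R) (alpha dalpha : R -> R) :
  0 < T ->
  increasing_homeo_fix0 phi ->
  continuous f ->
  caratheodory T h ->
  condA0 T h ->
  0 < a ->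
  in_D phi T alpha dalpha ->
  {ae (@lebesgue_measure R), forall t, 0 <= t <= T ->
     derivable (phi \o dalpha) t 1 /\ a <= Lop phi f h alpha dalpha t} ->
  strict_lower_solution phi f h T alpha dalpha.
Proof.
move=> T0 [phimono _] fc _ HA0 a0 Hal Hae.
split => //; split.
  by apply: aeS' Hae => t Ht /Ht [? ?]; split => //; lra.
move=> u du [Hu Huae] ule.
have [[Cal [al0 dal0]] ACal] := Hal.
have [[Cu [u0 du0]] ACu] := Hu.
pose w := fun t => u t - alpha t.
pose dw := fun t => du t - dalpha t.
have Qw : forall t, 0 <= t <= T -> Q_at [set s | 0 <= s <= T] w t (dw t).
  move=> t ht.
  exact: (@Q_atB _ _ _ _ _ _ _ (@C1_quot _ _ _ _ _ Cu ht) (@C1_quot _ _ _ _ _ Cal ht)).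
have wge : forall t, 0 <= t <= T -> 0 <= w t.
  by move=> t ht; rewrite /w subr_ge0; apply: ule.
move=> t0 ht0; rewrite lt_neqAle ule // andbT; apply/negP => /eqP e0.
have w0 : w t0 = 0 by rewrite /w e0 subrr.
have R1 : forall t, 0 <= t -> t < T -> w t = 0 -> 0 <= dw t.
  move=> t t0' tT wt; rewrite leNgt; apply/negP => dneg.
  have ht : 0 <= t <= T by rewrite t0' (ltW tT).
  have [d d0 Hd] := Qw t ht (- dw t / 2) ltac:(lra).
  have [s [s0 sd sT]] := @min2 _ d (T - t) d0 ltac:(lra).
  have ys : (t + s) - t = s by ring.
  have hy : 0 <= t + s <= T by apply/andP; split; lra.
  have yt : t + s != t by rewrite -subr_eq0 ys gt_eqF.
  have := Hd (t + s) hy yt ltac:(rewrite ys gtr0_norm //).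
  rewrite ys => Hq.
  have s0' : s != 0 by rewrite gt_eqF.
  have [Q1 _] := @quot_bound _ _ _ _ _ s0' Hq.
  have [Q _] := Q1 s0.
  move: Q.
  have := wge (t + s) hy.
  rewrite wt.
  nra.
have L1 : forall t, 0 < t -> t <= T -> w t = 0 -> dw t <= 0.
  move=> t t0' tT wt; rewrite leNgt; apply/negP => dpos.
  have ht : 0 <= t <= T by rewrite (ltW t0') tT.
  have [d d0 Hd] := Qw t ht (dw t / 2) ltac:(lra).
  have [s [s0 sd sT]] := @min2 _ d t d0 t0'.
  have ys : (t - s) - t = - s by ring.
  have hy : 0 <= t - s <= T by apply/andP; split; lra.
  have yt : t - s != t by rewrite -subr_eq0 ys oppr_eq0 gt_eqF.
  have := Hd (t - s) hy yt ltac:(rewrite ys normrN gtr0_norm //).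
  rewrite ys => Hq.
  have s0' : - s != 0 by rewrite oppr_eq0 gt_eqF.
  have [_ Q] := @quot_bound _ _ _ _ _ s0' Hq.
  have [_ Q'] := Q ltac:(lra).
  have := wge (t - s) hy.
  move: Q'; rewrite wt opprK.
  nra.
have zcase : w 0 = 0 -> exists t1, [/\ 0 <= t1, t1 < T, w t1 = 0 & dw t1 = 0].
  move=> wz; exists 0; split => //.
  have wT : w T = 0 by rewrite /w -u0 -al0.
  have := R1 0 (lexx 0) T0 wz; have := L1 T T0 (lexx T) wT.
  have : dw T = dw 0 by rewrite /dw du0 dal0.
  lra.
have [t1 [t10 t1T wt1 dwt1]] : exists t1, [/\ 0 <= t1, t1 < T, w t1 = 0 & dw t1 = 0].
  case/andP: ht0 => ht0a ht0b.
  case: (eqVneq t0 0) => [tz|tnz]; first by apply: zcase; move: w0; rewrite tz.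
  case: (eqVneq t0 T) => [tT|tnT].
    by apply: zcase; rewrite /w u0 al0 -tT; exact: w0.
  have t0T : t0 < T by rewrite lt_neqAle tnT ht0b.
  have t0p : 0 < t0 by rewrite lt_neqAle eq_sym tnz ht0a.
  exists t0; split => //.
  by apply/eqP; rewrite eq_le R1 ?L1 // ltW.
have ht1 : 0 <= t1 <= T by rewrite t10 (ltW t1T).
have eu : u t1 = alpha t1 by apply/eqP; rewrite -subr_eq0; apply/eqP; exact: wt1.
have edu : du t1 = dalpha t1 by apply/eqP; rewrite -subr_eq0; apply/eqP; exact: dwt1.
have [dp dp0 Hp] := @prod_small _ T f u du alpha dalpha t1 (a / 4) fc ht1 Cu Cal eu edu ltac:(lra).
have [dA dA0 HA] := HA0 t1 (alpha t1) (a / 8) ht1 ltac:(lra).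
have [du' du'0 Hu'] := @Q_at_cont _ _ _ _ _ (@C1_quot _ _ _ _ _ Cu ht1) dA dA0.
have [da' da'0 Ha'] := @Q_at_cont _ _ _ _ _ (@C1_quot _ _ _ _ _ Cal ht1) dA dA0.
have [m1 [m10 m1a m1b]] := @min2 _ _ _ dp0 dA0.
have [m2 [m20 m2a m2b]] := @min2 _ _ _ du'0 da'0.
have [m3 [m30 m3a m3b]] := @min2 _ _ _ m10 m20.
have [dl [dl0 dl1 dl2]] := @min2 _ m3 (T - t1) m30 ltac:(lra).
have dT : t1 + dl <= T by lra.
have aeG := @ae_bound _ T t1 dl a dp dA du' da' phi f h u du alpha dalpha t10 dT dl0
  ltac:(lra) ltac:(lra) ltac:(lra) ltac:(lra) eu Hp Hu' Ha' HA Huae Hae.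
have dwneg := @step2 _ T t1 dl a phi du dalpha phimono t10 dT a0 ACu ACal edu aeG.
exact: (@step3 _ T t1 dl w dw t10 dl0 dT Qw wge wt1 dwt1 dwneg).
Qed.
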